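(* Let $2\le k\le n$ be integers and let $G$ be a graph on $n$ vertices. Then $bp(G)\le n-k$ if and only if $G$ has a special subgraph of order $k$.
   Context: $bp(G)$ is the minimum number of pairwise edge-disjoint complete bipartite subgraphs (bicliques) of $G$ covering every edge exactly once. A biclique is a star if one of its two parts has exactly one vertex; a non-star biclique is a complete bipartite graph $K_{a,b}$ with $a,b\ge 2$. An induced subgraph $H$ of $G$ is a special subgraph of order $k$ if for some integer $r\ge 0$, $H$ has exactly $k+r$ vertices and the edge set of $H$ can be partitioned into at most $r$ pairwise edge-disjoint non-star bicliques (in particular an independent set of size $k$ is a special subgraph of order $k$, with $r=0$). *)

(* Defs.v *)
From mathcomp Require Import all_boot.
Set Implicit Arguments. Unset Strict Implicit. Unset Printing Implicit Defensive.

Record sgraph (T : finType) := SGraph {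
  sg_adj : rel T;
  sg_sym : symmetric sg_adj;
  sg_irr : irreflexive sg_adj }.

Section Bicliques.
Variables (T : finType) (adj : rel T).

Definition is_biclique (p : {set T} * {set T}) : bool :=
  [&& p.1 != set0, p.2 != set0, [disjoint p.1 & p.2] &
      [forall a in p.1, forall b in p.2, adj a b]].

Definition is_nonstar (p : {set T} * {set T}) : bool :=
  (2 <= #|p.1|) && (2 <= #|p.2|).

Definition covers (p : {set T} * {set T}) (x y : T) : bool :=
  ((x \in p.1) && (y \in p.2)) || ((y \in p.1) && (x \in p.2)).

Definition bp_decomp (s : seq ({set T} * {set T})) : bool :=
  all is_biclique s &&
  [forall x, forall y, adj x y ==> (count (fun p => covers p x y) s == 1)].

Definition has_bp_decomp (m : nat) : bool :=
  [exists t : m.-tuple ({set T} * {set T}), bp_decomp t].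

End Bicliques.

Lemma bp_exists (T : finType) (G : sgraph T) :
  exists m, has_bp_decomp (sg_adj G) m.
Proof.
set adj := sg_adj G.
pose L x := [set y | adj x y && (enum_rank x < enum_rank y)].
pose s := [seq ([set x], L x) | x <- enum T & L x != set0].
have Hs : bp_decomp adj s.
  apply/andP; split.
    apply/allP => p /mapP [x]; rewrite mem_filter => /andP [Lx _] ->.
    apply/and4P; split => //=.
    - by apply/set0Pn; exists x; rewrite in_set1.
    - rewrite disjoints1 inE ltnn andbF //.
    - apply/forallP => a; apply/implyP; rewrite in_set1 => /eqP ->.
      by apply/forallP => b; apply/implyP; rewrite inE => /andP [].
  have key : forall u v, adj u v -> enum_rank u < enum_rank v ->
      count (fun p => covers p u v) s = 1.
    move=> u v huv ruv; rewrite count_map.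
    have -> : count (preim (fun x => ([set x], L x)) (fun p => covers p u v))
        [seq x <- enum T | L x != set0] =
        count (pred1 u) [seq x <- enum T | L x != set0].
      apply: eq_count => x /=; rewrite /covers /= !in_set1 !inE.
      case: (eqVneq x u) => [->|xu] /=; first by rewrite huv ruv.
      case: (eqVneq x v) => [->|xv] /=; last by [].
      by rewrite ltnNge (ltnW ruv) andbF.
    rewrite count_uniq_mem; last by rewrite filter_uniq // enum_uniq.
    rewrite mem_filter mem_enum andbT.
    suff -> : L u != set0 by [].
    by apply/set0Pn; exists v; rewrite inE huv ruv.
  apply/forallP => x; apply/forallP => y; apply/implyP => hxy.
  case: (ltngtP (enum_rank x) (enum_rank y)) => r.
  - by rewrite key.
  - have -> : count (fun p => covers p x y) s = count (fun p => covers p y x) s.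
      by apply: eq_count => p; rewrite /covers orbC.
    by rewrite key // /adj sg_sym.
  - by move/val_inj/enum_rank_inj: r => r; subst y; rewrite /adj sg_irr in hxy.
exists (size s); apply/existsP; exists (in_tuple s); exact: Hs.
Qed.

Definition bp (T : finType) (G : sgraph T) : nat := ex_minn (bp_exists G).

Definition induced_adj (T : finType) (G : sgraph T) (S : {set T}) : rel T :=
  fun x y => [&& x \in S, y \in S & sg_adj G x y].

Definition has_special_subgraph (T : finType) (G : sgraph T) (k : nat) : Prop :=
  exists (S : {set T}) (r : nat) (s : seq ({set T} * {set T})),
    [/\ #|S| = k + r, size s <= r, all (@is_nonstar T) s &
        bp_decomp (induced_adj G S) s].

(* Main.v *)
Require Import Defs.
From mathcomp Require Import all_boot.
From mathcomp Require Import zify.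
Set Implicit Arguments. Unset Strict Implicit. Unset Printing Implicit Defensive.

Section Proof.
Variables (T : finType) (G : sgraph T).

Lemma bp_decomp_eq (a1 a2 : rel T) s : a1 =2 a2 -> bp_decomp a1 s = bp_decomp a2 s.
Proof.
move=> e; rewrite /bp_decomp.
have -> : all (is_biclique a1) s = all (is_biclique a2) s.
  apply: eq_all => p; rewrite /is_biclique.
  by under eq_forallb do under eq_forallb do rewrite e.
by under eq_forallb do under eq_forallb do rewrite e.
Qed.

Lemma induced_T : induced_adj G setT =2 sg_adj G.
Proof. by move=> x y; rewrite /induced_adj !inE. Qed.

Lemma bic_sub S p : is_biclique (induced_adj G S) p ->
  {subset p.1 <= S} /\ {subset p.2 <= S}.
Proof.
move/and4P=> [/set0Pn [a Ha] /set0Pn [b Hb] _ /forallP H]; split=> x Hx.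
- by move: (H x); rewrite Hx /= => /forallP /(_ b); rewrite Hb /= => /and3P [].
- by move: (H a); rewrite Ha /= => /forallP /(_ x); rewrite Hx /= => /and3P [].
Qed.

Lemma covers_sub S p x y : is_biclique (induced_adj G S) p -> covers p x y ->
  (x \in S) && (y \in S).
Proof.
move=> /bic_sub [h1 h2]; rewrite /covers => /orP [] /andP [a b].
- by rewrite (h1 _ a) (h2 _ b).
- by rewrite (h1 _ a) (h2 _ b).
Qed.

Lemma bic_mono (a1 a2 : rel T) p : (forall a b, a1 a b -> a2 a b) ->
  is_biclique a1 p -> is_biclique a2 p.
Proof.
move=> h /and4P [u v w /forallP H]; apply/and4P; split => //.
apply/forallP => a; apply/implyP => ha; apply/forallP => b; apply/implyP => hb.
by apply: h; move: (H a); rewrite ha /= => /forallP /(_ b); rewrite hb.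
Qed.

Lemma reduce m : forall S s, size s <= m -> bp_decomp (induced_adj G S) s ->
  exists (S' : {set T}) s', [/\ size s' + #|S| <= size s + #|S'|, all (@is_nonstar T) s' &
     bp_decomp (induced_adj G S') s'].
Proof.
elim: m => [|m IH] S s hs hd.
  by case: s hs hd => [_ hd|] //; exists S, [::]; split.
case: (boolP (all (@is_nonstar T) s)) => [hall|]; first by exists S, s; split.
case/allPn => p ps hp.
have /andP [hbic hcnt] := hd.
have hpb := allP hbic p ps.
have [v [vS hv]] : exists v, v \in S /\ (p.1 = [set v] \/ p.2 = [set v]).
  have [hs1 hs2] := bic_sub hpb.
  move: hpb hp => /and4P [n1 n2 _ _]; rewrite /is_nonstar.
  rewrite -card_gt0 in n1; rewrite -card_gt0 in n2.
  case: (ltnP #|p.1| 2) => c1.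
    have /cards1P [v ev] : #|p.1| == 1 by move: n1 c1; case: #|p.1| => [|[|]].
    exists v; split; last by left.
    by apply: hs1; rewrite ev set11.
  case: (ltnP #|p.2| 2) => c2 //.
    have /cards1P [v ev] : #|p.2| == 1 by move: n2 c2; case: #|p.2| => [|[|]].
    exists v; split; last by right.
    by apply: hs2; rewrite ev set11.
pose S1 := S :\ v.
pose f (q : {set T} * {set T}) := (q.1 :&: S1, q.2 :&: S1).
pose Q (q : {set T} * {set T}) := (q.1 != set0) && (q.2 != set0).
pose s1 := filter Q (map f s).
have hsz : size s1 < size s.
  rewrite /s1 size_filter count_map.
  have : has (predC (preim f Q)) s.
    apply/hasP; exists p => //=; rewrite /Q /f /= negb_and !negbK.
    case: hv => ->; [apply/orP; left|apply/orP; right];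
      apply/eqP/setP => x; rewrite !inE; case: eqP => //= ->; by rewrite eqxx.
  rewrite has_count; have := count_predC (preim f Q) s; lia.
have hcard : #|S| = #|S1|.+1 by rewrite (cardsD1 v S) vS.
have hd1 : bp_decomp (induced_adj G S1) s1.
  apply/andP; split.
    apply/allP => q; rewrite mem_filter => /andP [/andP [q1 q2]] /mapP [p0 p0s eq].
    subst q; move: (allP hbic p0 p0s) => /and4P [_ _ hdis /forallP H].
    apply/and4P; split => //.
      by apply: (disjointW _ _ hdis); apply: subsetIl.
    apply/forallP => a; apply/implyP; rewrite inE => /andP [ha aS1].
    apply/forallP => b; apply/implyP; rewrite inE => /andP [hb bS1].
    move: (H a); rewrite ha /= => /forallP /(_ b); rewrite hb /=.
    by rewrite /induced_adj aS1 bS1 => /and3P [].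
  apply/forallP => x; apply/forallP => y; apply/implyP => hxy.
  move: (hxy); rewrite /induced_adj => /and3P [xS1 yS1 axy].
  have xS : x \in S by move: xS1; rewrite inE => /andP [].
  have yS : y \in S by move: yS1; rewrite inE => /andP [].
  have := (forallP (forallP hcnt x) y); rewrite /induced_adj xS yS axy /= => hc.
  have Hc q : covers (f q) x y = covers q x y.
    by rewrite /covers /= !in_setI xS1 yS1 !andbT.
  rewrite /s1 count_filter count_map.
  rewrite (@eq_count _ _ (fun q => covers q x y)) //.
  move=> q /=; rewrite /preim /= Hc; case c: (covers q x y) => //=.
  move: c; rewrite -Hc /Q /covers /= => /orP [] /andP [h1 h2];
    apply/andP; split; apply/set0Pn; by eexists; eassumption.
have [S' [s' [h1 h2 h3]]] := IH S1 s1 (ltac:(lia)) hd1.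
exists S', s'; split => //; lia.
Qed.

Lemma extend (S : {set T}) v s : v \notin S -> bp_decomp (induced_adj G S) s ->
  exists s', size s' <= (size s).+1 /\ bp_decomp (induced_adj G (v |: S)) s'.
Proof.
move=> vS /andP [hb hc].
set N := [set y in S | sg_adj G v y].
pose q := ([set v], N).
have mono : forall a b, induced_adj G S a b -> induced_adj G (v |: S) a b.
  by move=> a b /and3P [h1 h2 h3]; rewrite /induced_adj !in_setU1 h1 h2 h3 !orbT.
have hb' : all (is_biclique (induced_adj G (v |: S))) s.
  by apply/allP => p ps; apply: bic_mono mono (allP hb p ps).
have cnt0 : forall x y, x \notin S -> count (fun p => covers p x y) s = 0.
  move=> x y xS; rewrite (@eq_in_count _ _ pred0) ?count_pred0 // => p ps /=.
  apply/negP => /(covers_sub (allP hb p ps)) /andP [h _]; by rewrite h in xS.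
have cnt0' : forall x y, y \notin S -> count (fun p => covers p x y) s = 0.
  move=> x y yS; rewrite (@eq_in_count _ _ pred0) ?count_pred0 // => p ps /=.
  apply/negP => /(covers_sub (allP hb p ps)) /andP [_ h]; by rewrite h in yS.
have cntS : forall x y, x \in S -> y \in S -> sg_adj G x y ->
    count (fun p => covers p x y) s = 1.
  move=> x y xS yS a; apply/eqP.
  by have := (forallP (forallP hc x) y); rewrite /induced_adj xS yS a.
have Hcase : forall x y, induced_adj G (v |: S) x y ->
    [\/ (x \in S) && (y \in S) && sg_adj G x y,
        (x == v) && (y \in N) | (y == v) && (x \in N)].
  move=> x y /and3P []; rewrite !in_setU1 => /orP [/eqP ->|xS] /orP [/eqP ->|yS] a.
  - by rewrite sg_irr in a.
  - by constructor 2; rewrite eqxx inE yS a.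
  - by constructor 3; rewrite eqxx inE xS sg_sym a.
  - by constructor 1; rewrite xS yS a.
case: (eqVneq N set0) => hN.
  exists s; split => //; apply/andP; split => //.
  apply/forallP => x; apply/forallP => y; apply/implyP => /Hcase [].
  - by move=> /andP [/andP [xS yS] a]; rewrite cntS.
  - by rewrite hN in_set0 andbF.
  - by rewrite hN in_set0 andbF.
exists (q :: s); split => //; apply/andP; split.
  rewrite /= hb' andbT; apply/and4P; split => //=.
  - by apply/set0Pn; exists v; rewrite set11.
  - by rewrite disjoints1 inE (negbTE vS).
  - apply/forallP => a; apply/implyP; rewrite inE => /eqP ->.
    apply/forallP => b; apply/implyP; rewrite inE => /andP [bS ab].
    by rewrite /induced_adj setU11 in_setU1 bS orbT ab.
apply/forallP => x; apply/forallP => y; apply/implyP => /Hcase [].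
- move=> /andP [/andP [xS yS] a] /=; rewrite cntS //.
  rewrite /covers /= !inE.
  have -> : (x == v) = false by apply/eqP => e; subst; rewrite xS in vS.
  have -> : (y == v) = false by apply/eqP => e; subst; rewrite yS in vS.
  by [].
- move=> /andP [/eqP e yN]; subst x => /=.
  rewrite cnt0 // /covers /= set11 yN; by [].
- move=> /andP [/eqP e xN]; subst y => /=.
  rewrite cnt0' // /covers /= set11 xN orbT; by [].
Qed.

Lemma extend_all d : forall (S : {set T}) s, #|T| - #|S| = d -> bp_decomp (induced_adj G S) s ->
  exists s', size s' <= size s + d /\ bp_decomp (induced_adj G setT) s'.
Proof.
elim: d => [|d IH] S s hd hb.
  have eS : S = setT by apply/eqP; rewrite eqEcard subsetT cardsT; lia.
  by rewrite eS in hb; exists s; rewrite addn0.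
have /subsetPn [v _ vS] : ~~ (setT \subset S).
  by apply/negP => /subset_leq_card; rewrite cardsT; lia.
have [s1 [h1 h2]] := extend vS hb.
have hc : #|T| - #|v |: S| = d by rewrite cardsU1 vS; lia.
have [s' [h3 h4]] := IH _ _ hc h2.
exists s'; split => //; lia.
Qed.

End Proof.

Theorem mainTheorem2 (n k : nat) (T : finType) (G : sgraph T) :
  #|T| = n -> 2 <= k -> k <= n ->
  (bp G <= n - k <-> has_special_subgraph G k).
Proof.
move=> hn hk hkn; split.
- rewrite /bp; case: ex_minnP => m /existsP [t ht] _ hm.
  have ht' : bp_decomp (induced_adj G setT) t.
    by rewrite (bp_decomp_eq _ (induced_T G)).
  have [S' [s' [h1 h2 h3]]] := reduce (leqnn (size t)) ht'.
  rewrite cardsT size_tuple in h1.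
  exists S', (#|S'| - k), s'; split => //; lia.
- case=> S [r [s [hS hr _ hd]]].
  have hST : #|S| <= #|T| by apply: max_card.
  have [s'' [h1 h2]] := extend_all (erefl (#|T| - #|S|)) hd.
  rewrite (bp_decomp_eq _ (induced_T G)) in h2.
  have Hh : has_bp_decomp (sg_adj G) (size s'').
    by apply/existsP; exists (in_tuple s'').
  rewrite /bp; case: ex_minnP => m _ hmin; have := hmin _ Hh; lia.
Qed.
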